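(* For all integers $n,k \geq 2$ there exists a set $S \subset \mathbb{R}^2$ such that any $k$ points of $S$ are visible from a common point of $S$ through polygonal paths of length $\leq n$ in $S$, but there exist $k+1$ points of $S$ that are not visible from any common point of $S$ through polygonal paths of length $\leq n$ in $S$.
   Context: For $S \subset \mathbb{R}^2$ and $x,y \in S$, ''$x$ sees $y$ through $S$ by a polygonal path of length $m$'' means there exist distinct points $x_1,\ldots,x_{m-1}$ such that the polygonal path $[x,x_1]\cup[x_1,x_2]\cup\cdots\cup[x_{m-1},y]$ is contained in $S$ (for $m=1$ this means $[x,y]\subset S$). ''Visible through polygonal paths of length $\leq n$'' means visible by such a path of some length $m \leq n$. *)

(* Defs.v *)
From Stdlib Require Import Reals List.
Import ListNotations.
Open Scope R_scope.

Definition pt : Type := (R * R)%type.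

Definition segment (a b : pt) (z : pt) : Prop :=
  exists t : R, 0 <= t <= 1 /\
    fst z = (1 - t) * fst a + t * fst b /\
    snd z = (1 - t) * snd a + t * snd b.

Fixpoint path_in (S : pt -> Prop) (x : pt) (l : list pt) (y : pt) : Prop :=
  match l with
  | nil => forall z, segment x y z -> S z
  | z0 :: l' => (forall z, segment x z0 z -> S z) /\ path_in S z0 l' y
  end.

Definition sees_by_path (S : pt -> Prop) (m : nat) (x y : pt) : Prop :=
  exists l : list pt, length l = (m - 1)%nat /\ NoDup l /\ path_in S x l y.

Definition visible_le (S : pt -> Prop) (n : nat) (x y : pt) : Prop :=
  exists m : nat, (1 <= m <= n)%nat /\ sees_by_path S m x y.

(* Main.v *)
Require Import Defs.
From Stdlib Require Import Reals List Lra Lia FinFun Classical.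
Import ListNotations.
Open Scope R_scope.

Definition par (h : nat) : R := if Nat.even h then 0 else 1.
Definition aa (j : nat) : R := - (2 ^ j).
Definition V (i h : nat) : pt := (INR i + par h / 2, INR h).
Definition Hb (j : nat) : pt := (aa j, 0).
Definition Q (i : nat) : pt := V i 1.
Definition Estrip (k i : nat) (z : pt) : Prop :=
  exists j, (j <= k)%nat /\ j <> i /\ segment (Hb j) (Q i) z.
Definition TowerPt (n i : nat) (z : pt) : Prop :=
  exists h, (1 <= h)%nat /\ (h + 1 <= n)%nat /\ segment (V i h) (V i (h + 1)) z.
Definition SS (n k : nat) (z : pt) : Prop :=
  exists i, (i <= k)%nat /\ (Estrip k i z \/ TowerPt n i z).

Lemma par01 h : par h = 0 \/ par h = 1.
Proof. unfold par; destruct (Nat.even h); auto. Qed.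

Lemma par_S h : par (S h) = 1 - par h.
Proof.
  unfold par. rewrite Nat.even_succ, <- Nat.negb_even.
  destruct (Nat.even h); simpl; lra.
Qed.

Lemma par1 : par 1 = 1. Proof. reflexivity. Qed.
Lemma par2 : par 2 = 0. Proof. reflexivity. Qed.

Lemma seg_l a b : segment a b a.
Proof. exists 0. split; [lra|]. split; ring. Qed.
Lemma seg_r a b : segment a b b.
Proof. exists 1. split; [lra|]. split; ring. Qed.

Lemma seg_pt a b t : 0 <= t <= 1 ->
  segment a b ((1-t)*fst a + t*fst b, (1-t)*snd a + t*snd b).
Proof. intros. exists t. split; auto. Qed.

Lemma seg_sub a b u v w : segment a b u -> segment a b v -> segment u v w -> segment a b w.
Proof.
  intros [s [Hs [Hu1 Hu2]]] [s' [Hs' [Hv1 Hv2]]] [t [Ht [Hw1 Hw2]]].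
  exists ((1-t)*s + t*s'). split; [nra|].
  split; [rewrite Hw1, Hu1, Hv1; ring | rewrite Hw2, Hu2, Hv2; ring].
Qed.

Lemma seg_sym a b w : segment a b w -> segment b a w.
Proof.
  intros [t [Ht [H1 H2]]]. exists (1-t). split; [lra|].
  split; [rewrite H1; ring | rewrite H2; ring].
Qed.

Lemma strip_coords i j z : segment (Hb j) (Q i) z ->
  0 <= snd z <= 1 /\ fst z = aa j * (1 - snd z) + snd z * (INR i + 1/2).
Proof.
  intros [t [Ht [H1 H2]]]. unfold Hb, Q, V in *; simpl in *.
  rewrite par1 in H1. split; [lra|]. rewrite H1, H2. field.
Qed.

Lemma tower_coords n i z : TowerPt n i z -> exists h, (1 <= h)%nat /\ (h + 1 <= n)%nat /\
  INR h <= snd z <= INR h + 1 /\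
  fst z = INR i + ((1 - (snd z - INR h)) * par h + (snd z - INR h) * par (h+1)) / 2.
Proof.
  intros [h [H1 [H2 [t [Ht [E1 E2]]]]]]. exists h. split; auto. split; auto.
  unfold V in *; simpl in *. rewrite plus_INR in E2. simpl in E2.
  split; [lra|]. rewrite E1, E2. field.
Qed.

Lemma tower_bounds n i z : TowerPt n i z ->
  1 <= snd z <= INR n /\ INR i <= fst z <= INR i + 1/2.
Proof.
  intros HT. destruct (tower_coords _ _ _ HT) as [h [H1 [H2 [H3 H4]]]].
  assert (1 <= INR h) by (apply (le_INR 1 h) in H1; simpl in H1; lra).
  assert (INR h + 1 <= INR n) by (apply le_INR in H2; rewrite plus_INR in H2; simpl in H2; lra).
  split; [lra|]. rewrite H4.
  destruct (par01 h) as [-> | ->]; destruct (par01 (h+1)) as [-> | ->]; split; nra.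
Qed.

Lemma nat_between h m y : INR h <= y <= INR h + 1 -> INR m < y < INR m + 1 -> h = m.
Proof.
  intros [A1 A2] [B1 B2].
  assert (h < S m)%nat by (apply INR_lt; rewrite S_INR; lra).
  assert (m < S h)%nat by (apply INR_lt; rewrite S_INR; lra).
  lia.
Qed.

Lemma nat_at h m : INR h <= INR m <= INR h + 1 -> h = m \/ (h + 1 = m)%nat.
Proof.
  intros [A1 A2]. apply INR_le in A1.
  assert (m <= S h)%nat by (apply INR_le; rewrite S_INR; lra). lia.
Qed.

Lemma tower_x_at_int n i z m : TowerPt n i z -> snd z = INR m -> fst z = INR i + par m / 2.
Proof.
  intros HT Hy. destruct (tower_coords _ _ _ HT) as [h [H1 [H2 [H3 H4]]]].
  rewrite Hy in H3. destruct (nat_at h m H3) as [<- | <-].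
  - rewrite H4, Hy. field.
  - rewrite H4, Hy, plus_INR. simpl. field.
Qed.

Lemma tower_x_between n i z m : TowerPt n i z -> INR m < snd z < INR m + 1 ->
  fst z = INR i + ((1 - (snd z - INR m)) * par m + (snd z - INR m) * par (m+1)) / 2.
Proof.
  intros HT Hy. destruct (tower_coords _ _ _ HT) as [h [H1 [H2 [H3 H4]]]].
  rewrite <- (nat_between h m (snd z) H3 Hy). exact H4.
Qed.

Section Fixed.
Variables n k : nat.
Hypothesis hn : (2 <= n)%nat.
Hypothesis hk : (2 <= k)%nat.

Lemma Q_tower i : TowerPt n i (Q i).
Proof.
  exists 1%nat. split; [lia|]. split; [lia|]. apply seg_l.
Qed.

Lemma S_high z : SS n k z -> 1 <= snd z -> exists i, (i <= k)%nat /\ TowerPt n i z.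
Proof.
  intros [i [Hi [HE | HT]]] Hy.
  - destruct HE as [j [Hj [Hji Hs]]]. destruct (strip_coords _ _ _ Hs) as [Hy1 Hx].
    exists i. split; auto.
    assert (E : z = Q i).
    { destruct z as [x y]; simpl in *. unfold Q, V. rewrite par1. simpl.
      assert (y = 1) by lra. subst y. f_equal. lra. }
    rewrite E. apply Q_tower.
  - exists i; auto.
Qed.

Lemma S_low z : SS n k z -> snd z < 1 -> exists i, (i <= k)%nat /\ Estrip k i z.
Proof.
  intros [i [Hi [HE | HT]]] Hy.
  - exists i; auto.
  - destruct (tower_bounds _ _ _ HT). lra.
Qed.

Lemma S_x_high z : SS n k z -> 1 <= snd z -> exists m, INR m <= fst z <= INR m + 1/2.
Proof.
  intros HS Hy. destruct (S_high z HS Hy) as [i [_ HT]].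
  exists i. apply (tower_bounds _ _ _ HT).
Qed.

Lemma slab_core u v i i' : (forall w, segment u v w -> SS n k w) ->
  1 <= snd u -> 1 <= snd v -> INR i' <= fst u <= INR i' + 1/2 ->
  INR i <= fst v <= INR i + 1/2 -> (i' < i)%nat -> False.
Proof.
  intros HS Hu Hv Hxu Hxv Hlt.
  assert (INR i' + 1 <= INR i) by (rewrite <- S_INR; apply le_INR; lia).
  set (xs := INR i - 1/4).
  set (t := (xs - fst u) / (fst v - fst u)).
  assert (Hd : fst v - fst u > 0) by lra.
  assert (Ht : 0 <= t <= 1).
  { unfold t; split.
    - apply Rmult_le_pos; [unfold xs; lra | left; apply Rinv_0_lt_compat; lra].
    - apply (Rmult_le_reg_r (fst v - fst u)); [lra|]. unfold Rdiv.
      rewrite Rmult_assoc, Rinv_l; [unfold xs; lra | lra]. }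
  pose proof (HS _ (seg_pt u v t Ht)) as Hw.
  destruct (S_x_high _ Hw) as [m Hm]; simpl; [nra|].
  simpl in Hm.
  assert (Ex : (1 - t) * fst u + t * fst v = xs).
  { unfold t. field. lra. }
  rewrite Ex in Hm. unfold xs in Hm.
  destruct (Compare_dec.lt_dec m i) as [Hmi | Hmi].
  - assert (INR m + 1 <= INR i) by (rewrite <- S_INR; apply le_INR; lia). lra.
  - assert (INR i <= INR m) by (apply le_INR; lia). lra.
Qed.

Lemma slab u v i i' : (forall w, segment u v w -> SS n k w) ->
  1 <= snd u -> 1 <= snd v -> INR i' <= fst u <= INR i' + 1/2 ->
  INR i <= fst v <= INR i + 1/2 -> i' = i.
Proof.
  intros HS Hu Hv Hxu Hxv.
  destruct (Compare_dec.lt_eq_lt_dec i' i) as [[Hlt | Heq] | Hgt]; auto.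
  - exfalso. eapply slab_core; eauto.
  - exfalso. eapply (slab_core v u i' i); eauto.
    intros w Hw. apply HS. apply seg_sym. exact Hw.
Qed.

Lemma seg_sub_r u v w : segment u v w -> forall z, segment w v z -> segment u v z.
Proof. intros Hw z Hz. eapply seg_sub; [exact Hw | apply seg_r | exact Hz]. Qed.
Lemma seg_sub_l u v w : segment u v w -> forall z, segment u w z -> segment u v z.
Proof. intros Hw z Hz. eapply seg_sub; [apply seg_l | exact Hw | exact Hz]. Qed.

Lemma tower_on_seg u v w i : (forall z, segment u v z -> SS n k z) -> TowerPt n i v ->
  segment u v w -> 1 <= snd w -> TowerPt n i w.
Proof.
  intros HS HT Hw Hy.
  destruct (S_high w (HS _ Hw) Hy) as [i' [_ HT']].
  assert (i' = i).
  { apply (slab w v i i').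
    - intros z Hz. apply HS. eapply seg_sub_r; eauto.
    - lra.
    - apply (tower_bounds _ _ _ HT).
    - apply (tower_bounds _ _ _ HT').
    - apply (tower_bounds _ _ _ HT). }
  subst; auto.
Qed.

Lemma pt_at_height u v Y : snd u < snd v -> snd u <= Y <= snd v ->
  exists w, segment u v w /\ snd w = Y /\
    fst w = fst u + (Y - snd u) / (snd v - snd u) * (fst v - fst u).
Proof.
  intros Hlt HY.
  set (t := (Y - snd u) / (snd v - snd u)).
  assert (Ht : 0 <= t <= 1).
  { unfold t; split.
    - apply Rmult_le_pos; [lra | left; apply Rinv_0_lt_compat; lra].
    - apply (Rmult_le_reg_r (snd v - snd u)); [lra|]. unfold Rdiv.
      rewrite Rmult_assoc, Rinv_l; lra. }
  exists ((1-t)*fst u + t*fst v, (1-t)*snd u + t*snd v).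
  split; [apply seg_pt; auto|]. simpl. split.
  - unfold t. field. lra.
  - fold t. ring.
Qed.


Lemma zz u v i : (forall z, segment u v z -> SS n k z) -> TowerPt n i u -> TowerPt n i v ->
  snd u + 1 < snd v -> False.
Proof.
  intros HS Hu Hv Hlt.
  destruct (tower_coords _ _ _ Hu) as [h [_ [_ [Hyu _]]]].
  pose proof (tower_bounds _ _ _ Hu) as [[Hu1 _] _].
  assert (Hm : exists m', snd u < INR m' + 1 <= snd u + 1).
  { destruct (Rlt_dec (snd u) (INR h + 1)).
    - exists h. lra.
    - exists (S h). rewrite S_INR. lra. }
  destruct Hm as [m' Hm]. set (M := INR m' + 1) in *.
  set (eps := Rmin (M - snd u) (snd v - M) / 2).
  assert (He1 : 0 < eps).
  { unfold eps. apply Rmin_case; lra. }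
  assert (He2 : eps <= (M - snd u) / 2) by (unfold eps; pose proof (Rmin_l (M - snd u) (snd v - M)); lra).
  assert (He3 : eps <= (snd v - M) / 2) by (unfold eps; pose proof (Rmin_r (M - snd u) (snd v - M)); lra).
  assert (Hd : snd u < snd v) by lra.
  destruct (pt_at_height u v (M - eps) Hd) as [w1 [Hw1 [Hy1 Hx1]]]; [lra|].
  destruct (pt_at_height u v M Hd) as [w0 [Hw0 [Hy0 Hx0]]]; [lra|].
  destruct (pt_at_height u v (M + eps) Hd) as [w2 [Hw2 [Hy2 Hx2]]]; [lra|].
  assert (T1 : TowerPt n i w1) by (eapply tower_on_seg; eauto; lra).
  assert (T0 : TowerPt n i w0) by (eapply tower_on_seg; eauto; lra).
  assert (T2 : TowerPt n i w2) by (eapply tower_on_seg; eauto; lra).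
  pose proof (tower_x_between _ _ _ m' T1) as X1.
  rewrite Hy1 in X1. specialize (X1 ltac:(unfold M in *; lra)).
  pose proof (tower_x_at_int _ _ _ (S m') T0) as X0.
  rewrite Hy0 in X0. specialize (X0 ltac:(unfold M; rewrite S_INR; lra)).
  pose proof (tower_x_between _ _ _ (S m') T2) as X2.
  rewrite Hy2, S_INR in X2. specialize (X2 ltac:(unfold M in *; lra)).
  rewrite Nat.add_1_r, !par_S in X2. rewrite Nat.add_1_r, par_S in X1. rewrite par_S in X0.
  set (c := (fst v - fst u) / (snd v - snd u)).
  assert (L : forall Y, (Y - snd u) / (snd v - snd u) * (fst v - fst u) = (Y - snd u) * c).
  { intro Y. unfold c. field. lra. }
  rewrite L in Hx1, Hx0, Hx2.
  assert (Sum : fst w1 + fst w2 - 2 * fst w0 = 0).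
  { rewrite Hx1, Hx2, Hx0. ring. }
  rewrite X1, X2, X0 in Sum. unfold M in Sum.
  destruct (par01 m') as [Hp | Hp]; rewrite Hp in Sum; lra.
Qed.

Definition W := 2 ^ k + INR k + 1.

Lemma aa_bounds j : (j <= k)%nat -> - (2 ^ k) <= aa j <= -1.
Proof.
  intros Hj. unfold aa. split.
  - apply Ropp_le_contravar. apply Rle_pow; [lra | auto].
  - apply Ropp_le_contravar. apply pow_R1_Rle. lra.
Qed.

Lemma F1 q r i : (forall w, segment q r w -> SS n k w) -> TowerPt n i r -> (i <= k)%nat ->
  (TowerPt n i q /\ snd r - 1 <= snd q) \/ (Estrip k i q /\ r = Q i).
Proof.
  intros HS HT Hik.
  pose proof (HS q (seg_l q r)) as Hq.
  pose proof (tower_bounds _ _ _ HT) as [[Hr1 Hrn] Hrx].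
  destruct (Rle_lt_dec 1 (snd q)) as [Hq1 | Hq1].
  - left. destruct (S_high q Hq Hq1) as [i' [_ HT']].
    assert (i' = i).
    { apply (slab q r i i' HS Hq1 Hr1 (proj2 (tower_bounds _ _ _ HT')) Hrx). }
    subst i'. split; auto.
    destruct (Rle_lt_dec (snd r - 1) (snd q)) as [ | Hc]; auto.
    exfalso. apply (zz q r i HS HT' HT). lra.
  - right.
    assert (Hd : snd q < snd r) by lra.
    destruct (S_low q Hq Hq1) as [iq [Hiq [jq [Hjq [_ Hsq]]]]].
    destruct (strip_coords _ _ _ Hsq) as [Hyq Hxq].
    destruct (pt_at_height q r 1 Hd) as [z1 [Hz1 [Hy1 Hx1]]]; [lra|].
    assert (T1 : TowerPt n i z1) by (eapply tower_on_seg; eauto; lra).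
    pose proof (tower_x_at_int _ _ _ 1 T1 Hy1) as X1. rewrite par1 in X1.
    set (bi := INR i + 1/2) in *.
    set (c := (fst r - fst q) / (snd r - snd q)).
    assert (L : forall Y, (Y - snd q) / (snd r - snd q) * (fst r - fst q) = (Y - snd q) * c).
    { intro Y. unfold c. field. lra. }
    rewrite L in Hx1.
    assert (HW : 0 < W).
    { unfold W. pose proof (pos_INR k). pose proof (pow_lt 2 k ltac:(lra)). lra. }
    set (s := / (4 * W)).
    assert (Hs : 0 < s /\ s <= 1) .
    { unfold s. split. apply Rinv_0_lt_compat; lra.
      unfold W. pose proof (pos_INR k). pose proof (pow_R1_Rle 2 k ltac:(lra)).
      rewrite <- Rinv_1. apply Rinv_le_contravar; lra. }
    destruct (pt_at_height q r (1 - s * (1 - snd q)) Hd) as [zs [Hzs [Hys Hxs]]]; [nra|].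
    rewrite L in Hxs.
    assert (Hzs' : snd zs < 1) by nra.
    destruct (S_low zs (HS _ Hzs) Hzs') as [i' [Hi' [j' [Hj' [Hji' Hs']]]]].
    destruct (strip_coords _ _ _ Hs') as [_ Hxs'].
    assert (Exs : fst zs = bi + s * (fst q - bi)).
    { rewrite Hxs. replace (1 - s * (1 - snd q) - snd q) with ((1 - snd q) * (1 - s)) by ring.
      assert (Hc1 : (1 - snd q) * c = bi - fst q) by lra.
      replace ((1 - snd q) * (1 - s) * c) with ((1 - s) * ((1 - snd q) * c)) by ring.
      rewrite Hc1. ring. }
    assert (Hii : i' = i).
    { pose proof (aa_bounds j' Hj') as Ha'.
      pose proof (aa_bounds jq Hjq) as Haq.
      assert (INR i' <= INR k) by (apply le_INR; auto).
      assert (INR i <= INR k) by (apply le_INR; auto).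
      assert (INR iq <= INR k) by (apply le_INR; auto).
      pose proof (pos_INR i). pose proof (pos_INR i'). pose proof (pos_INR iq).
      set (D := (1 - snd q) * (aa j' - (INR i' + 1/2)) - (fst q - bi)).
      assert (HD : bi - (INR i' + 1/2) = s * D).
      { unfold D. rewrite Exs, Hys in Hxs'. nra. }
      assert (HDb : - (2 * W) <= D <= 2 * W).
      { unfold D, W, bi. rewrite Hxq. split; nra. }
      assert (Hsd : - (1/2) <= s * D <= 1/2).
      { unfold s. split.
        - apply (Rmult_le_reg_l (4 * W)); [lra|].
          rewrite <- Rmult_assoc, Rinv_r; lra.
        - apply (Rmult_le_reg_l (4 * W)); [lra|].
          rewrite <- Rmult_assoc, Rinv_r; lra. }
      rewrite <- HD in Hsd. unfold bi in Hsd.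
      destruct (Compare_dec.lt_eq_lt_dec i' i) as [[Hlt | Heq] | Hgt]; auto.
      - assert (INR i' + 1 <= INR i) by (rewrite <- S_INR; apply le_INR; lia). lra.
      - assert (INR i + 1 <= INR i') by (rewrite <- S_INR; apply le_INR; lia). lra. }
    subst i'.
    assert (Hxq2 : fst q = aa j' * (1 - snd q) + snd q * bi).
    { rewrite Exs, Hys in Hxs'. fold bi in Hxs'.
      assert (s * (fst q - bi) = s * ((1 - snd q) * (aa j' - bi))) by nra.
      apply Rmult_eq_reg_l in H; [|lra]. lra. }
    split.
    + exists j'. split; auto. split; auto.
      exists (snd q). split; [lra|]. unfold Hb, Q, V. simpl. rewrite par1.
      split; [rewrite Hxq2; unfold bi; ring | ring].
    +
      destruct (Req_dec (snd r) 1) as [Hr | Hr].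
      * pose proof (tower_x_at_int _ _ _ 1 HT Hr) as Xr. rewrite par1 in Xr.
        destruct r as [xr yr]; unfold Q, V; simpl in *. rewrite par1. f_equal; lra.
      * exfalso.
        set (Y := 1 + Rmin (snd r - 1) 1 / 2).
        assert (HY1 : 1 < Y) by (unfold Y; apply Rmin_case; lra).
        assert (HY2 : Y <= snd r) by (unfold Y; pose proof (Rmin_l (snd r - 1) 1); lra).
        assert (HY3 : Y < 2) by (unfold Y; pose proof (Rmin_r (snd r - 1) 1); lra).
        destruct (pt_at_height q r Y Hd) as [wy [Hwy [Hyy Hxy]]]; [lra|].
        rewrite L in Hxy.
        assert (Ty : TowerPt n i wy) by (eapply tower_on_seg; eauto; lra).
        pose proof (tower_x_between _ _ _ 1 Ty) as Xy. rewrite Hyy in Xy.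
        specialize (Xy ltac:(simpl; lra)). rewrite par1 in Xy.
        replace (par (1+1)) with 0 in Xy by reflexivity. simpl INR in Xy.
        (* c = bi - aa j' from q, and c = -1/2 from wy *)
        assert (Hc1 : (1 - snd q) * c = (1 - snd q) * (bi - aa j')) by nra.
        apply Rmult_eq_reg_l in Hc1; [|lra].
        pose proof (aa_bounds j' Hj'). pose proof (pos_INR i).
        assert (Hc2 : (Y - 1) * c = (Y - 1) * (- (1/2))) by (unfold bi in *; nra).
        apply Rmult_eq_reg_l in Hc2; [|lra].
        unfold bi in Hc1. lra.
Qed.


Definition Good i p m : Prop :=
  (TowerPt n i p /\ INR n - INR m <= snd p) \/ (Estrip k i p /\ (n <= m)%nat) \/ (n < m)%nat.

Lemma top_tower i : TowerPt n i (V i n).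
Proof.
  exists (n - 1)%nat. split; [lia|]. split; [lia|].
  replace (n - 1 + 1)%nat with n by lia. apply seg_r.
Qed.

Lemma back_ind i : (i <= k)%nat -> forall l p, path_in (SS n k) p l (V i n) -> Good i p (S (length l)).
Proof.
  intros Hik l. induction l as [|z0 l IH]; intros p Hp; simpl in *.
  - destruct (F1 p (V i n) i Hp (top_tower i) Hik) as [[HT Hy] | [HE Heq]].
    + left. split; auto; simpl in *; lra.
    + exfalso. unfold Q, V in Heq. injection Heq as _ Heq.
      change 1 with (INR 1) in Heq. apply INR_eq in Heq. lia.
  - destruct Hp as [Hseg Hpath]. specialize (IH z0 Hpath).
    destruct IH as [[HT Hy] | [[HE Hle] | Hlt]].
    + destruct (F1 p z0 i Hseg HT Hik) as [[HT' Hy'] | [HE' Heq]].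
      * left. split; auto. rewrite S_INR. lra.
      * right; left. split; auto. subst z0. unfold Q, V in Hy; cbn [snd] in Hy. change (INR 1) with 1 in Hy.
        assert (INR n <= INR (S (S (length l)))) by (rewrite S_INR; lra).
        apply INR_le in H. lia.
    + right; right. lia.
    + right; right. lia.
Qed.

Lemma vis_target i p : (i <= k)%nat -> visible_le (SS n k) n p (V i n) -> TowerPt n i p \/ Estrip k i p.
Proof.
  intros Hik [m [Hm [l [Hl [_ Hp]]]]].
  pose proof (back_ind i Hik l p Hp) as G.
  replace (S (length l)) with m in G by lia.
  destruct G as [[HT _] | [[HE _] | Hlt]]; auto. lia.
Qed.

Lemma pow2_no_ap a b c : a <> c -> 2 ^ a + 2 ^ c <> 2 * 2 ^ b.
Proof.
  intros Hac E.
  assert (Hg : forall a c, (a < c)%nat -> 2 ^ a + 2 ^ c = 2 * 2 ^ b -> False).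
  { clear a c Hac E. intros a c Hac E.
    pose proof (Rlt_pow 2 a c ltac:(lra) Hac).
    pose proof (pow_lt 2 a ltac:(lra)).
    destruct (Compare_dec.le_lt_dec c b) as [Hcb | Hbc].
    - pose proof (Rle_pow 2 c b ltac:(lra) Hcb). lra.
    - destruct (Compare_dec.le_lt_dec (S b) c) as [Hbc2 | Hbc2].
      + pose proof (Rle_pow 2 (S b) c ltac:(lra) Hbc2). simpl in H1. lra.
      + lia. }
  destruct (Compare_dec.lt_eq_lt_dec a c) as [[H|H]|H].
  - exact (Hg a c H E).
  - contradiction.
  - apply (Hg c a H). lra.
Qed.

Lemma strip_at_y p i : Estrip k i p -> exists j, (j <= k)%nat /\ j <> i /\ 0 <= snd p <= 1 /\
  fst p = aa j * (1 - snd p) + snd p * (INR i + 1/2).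
Proof.
  intros [j [Hj [Hji Hs]]]. exists j. split; auto. split; auto. apply strip_coords; auto.
Qed.

Lemma no_viewer p : (forall i, (i <= k)%nat -> TowerPt n i p \/ Estrip k i p) -> False.
Proof.
  intros Hall.
  assert (Hx : forall i, (i <= k)%nat -> 1 <= snd p -> INR i <= fst p <= INR i + 1/2).
  { intros i Hi Hy. destruct (Hall i Hi) as [HT | HE].
    - apply (tower_bounds _ _ _ HT).
    - destruct (strip_at_y p i HE) as [j [_ [_ [Hy' Hx']]]].
      assert (snd p = 1) by lra. rewrite Hx', H. lra. }
  destruct (Rle_lt_dec 1 (snd p)) as [Hy | Hy].
  - pose proof (Hx 0%nat ltac:(lia) Hy). pose proof (Hx 1%nat ltac:(lia) Hy).
    simpl in *. lra.
  - assert (HE : forall i, (i <= k)%nat -> Estrip k i p).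
    { intros i Hi. destruct (Hall i Hi) as [HT | HE]; auto.
      destruct (tower_bounds _ _ _ HT). lra. }
    destruct (strip_at_y p 0 (HE 0%nat ltac:(lia))) as [j0 [Hj0 [Hj0i [Hy0 Hx0]]]].
    destruct (Req_dec (snd p) 0) as [Hz | Hz].
    + destruct (strip_at_y p j0 (HE j0 Hj0)) as [j1 [Hj1 [Hj1i [_ Hx1]]]].
      rewrite Hz in Hx0, Hx1. unfold aa in *.
      assert (E : 2 ^ j0 = 2 ^ j1) by lra.
      destruct (Compare_dec.lt_eq_lt_dec j0 j1) as [[H|H]|H].
      * pose proof (Rlt_pow 2 _ _ ltac:(lra) H). lra.
      * congruence.
      * pose proof (Rlt_pow 2 _ _ ltac:(lra) H). lra.
    + destruct (strip_at_y p 1 (HE 1%nat ltac:(lia))) as [j1 [Hj1 [Hj1i [_ Hx1]]]].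
      destruct (strip_at_y p 2 (HE 2%nat ltac:(lia))) as [j2 [Hj2 [Hj2i [_ Hx2]]]].
      simpl INR in *.
      assert (Hy0' : 0 < snd p < 1) by lra.
      assert (E1 : (aa j0 - aa j1) * (1 - snd p) = snd p) by lra.
      assert (E2 : (aa j1 - aa j2) * (1 - snd p) = snd p) by lra.
      assert (E3 : (aa j0 - aa j1) * (1 - snd p) = (aa j1 - aa j2) * (1 - snd p)) by lra.
      apply Rmult_eq_reg_r in E3; [|lra].
      assert (Hne : j0 <> j2).
      { intro Heq. subst j2. nra. }
      apply (pow2_no_ap j0 j1 j2 Hne). unfold aa in E3. lra.
Qed.

Lemma tower_path i h z : (i <= k)%nat -> (h + 1 <= n)%nat -> segment (V i h) (V i (h + 1)) z ->
  forall c a, (1 <= a)%nat -> (a + c = h)%nat ->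
  path_in (SS n k) (V i a) (map (V i) (seq (S a) c)) z.
Proof.
  intros Hik Hh Hz c. induction c as [|c IH]; intros a Ha Hac; simpl.
  - replace a with h by lia. intros w Hw. exists i. split; auto. right.
    exists h. split; [lia|]. split; auto. eapply seg_sub_l; eauto.
  - split.
    + intros w Hw. exists i. split; auto. right. exists a. split; auto. split; [lia|].
      rewrite Nat.add_1_r. exact Hw.
    + apply IH; lia.
Qed.

Lemma vis_idx m i z : (m <= k)%nat -> (i <= k)%nat -> i <> m ->
  (Estrip k i z \/ TowerPt n i z) -> visible_le (SS n k) n (Hb m) z.
Proof.
  intros Hm Hi Him [[j [Hj [Hji Hs]]] | [h [Hh1 [Hh2 Hs]]]].
  - exists 2%nat. split; [lia|]. exists [Q i]. split; [reflexivity|]. split.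
    + constructor; [intros []|constructor].
    + simpl. split.
      * intros w Hw. exists i. split; auto. left. exists m. auto.
      * intros w Hw. exists i. split; auto. left. exists j. split; auto. split; auto.
        eapply seg_sub; [apply seg_r | exact Hs | exact Hw].
  - exists (S h). split; [lia|]. exists (map (V i) (seq 1 h)).
    split; [rewrite length_map, length_seq; lia|]. split.
    + apply Injective_map_NoDup; [|apply seq_NoDup].
      intros x y Exy. unfold V in Exy. injection Exy as _ E. apply INR_eq; auto.
    + destruct h as [|h']; [lia|]. simpl. split.
      * intros w Hw. exists i. split; auto. left. exists m. auto.
      * apply (tower_path i (S h') z Hi Hh2 Hs h' 1%nat); lia.
Qed.

Lemma fresh (L : list nat) : (length L <= k)%nat -> exists m, (m <= k)%nat /\ ~ In m L.
Proof.
  intros HL. apply NNPP. intro Hn.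
  assert (Hinc : incl (seq 0 (S k)) L).
  { intros m Hm. apply in_seq in Hm. apply NNPP. intro Hnm. apply Hn. exists m. split; [lia|auto]. }
  pose proof (NoDup_incl_length (seq_NoDup (S k) 0) Hinc). rewrite length_seq in H. lia.
Qed.

Lemma choose_idx (l : list pt) : Forall (SS n k) l ->
  exists L, length L = length l /\ Forall2 (fun z i => (i <= k)%nat /\ (Estrip k i z \/ TowerPt n i z)) l L.
Proof.
  induction 1 as [|z l [i [Hi Hz]] _ [L [HL HF]]].
  - exists []. split; auto.
  - exists (i :: L). split; simpl; auto.
Qed.

Lemma positive (l : list pt) : length l = k -> Forall (SS n k) l ->
  exists p, SS n k p /\ Forall (fun x => visible_le (SS n k) n p x) l.
Proof.
  intros Hl HS. destruct (choose_idx l HS) as [L [HL HF]].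
  destruct (fresh L ltac:(lia)) as [m [Hm HnL]].
  exists (Hb m). split.
  - exists (if Nat.eqb m 0 then 1%nat else 0%nat). split; [destruct (Nat.eqb m 0); lia|].
    left. exists m. split; auto. split; [destruct (Nat.eqb_spec m 0); lia|]. apply seg_l.
  - clear HL Hl HS. induction HF as [|z i l L [Hi Hz] HF IH]; constructor.
    + apply (vis_idx m i z Hm Hi); auto. intro E; subst; apply HnL; left; auto.
    + apply IH. intro; apply HnL; right; auto.
Qed.

End Fixed.

Theorem theorem1p6 (n k : nat) (hn : (2 <= n)%nat) (hk : (2 <= k)%nat) :
  exists S : pt -> Prop,
    (forall l : list pt, length l = k -> NoDup l -> Forall S l ->
       exists p : pt, S p /\ Forall (fun x => visible_le S n p x) l) /\
    (exists l : list pt, length l = (k + 1)%nat /\ NoDup l /\ Forall S l /\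
       ~ (exists p : pt, S p /\ Forall (fun x => visible_le S n p x) l)).
Proof.
  exists (SS n k). split.
  - intros l Hl _ HS. apply (positive n k hn hk); auto.
  - exists (map (fun i => V i n) (seq 0 (S k))). split; [rewrite length_map, length_seq; lia|].
    split; [|split].
    + apply Injective_map_NoDup; [|apply seq_NoDup].
      intros x y Exy. unfold V in Exy. injection Exy as E. apply INR_eq. lra.
    + apply Forall_forall. intros z Hz. apply in_map_iff in Hz as [i [<- Hi]].
      apply in_seq in Hi. exists i. split; [lia|]. right. apply (top_tower n k hn hk).
    + intros [p [Hp HF]]. apply (no_viewer n k hn hk p).
      intros i Hi. apply (vis_target n k hn hk i p Hi).
      rewrite Forall_forall in HF. apply HF. apply (in_map (fun i => V i n)). apply in_seq. lia.
Qed.
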